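(* Let $K_1=\overline{1}$ and, for $j\ge1$, let $K_{j+1}$ be the periodic sequence whose repeating block is obtained by writing the repeating block of $K_j$ twice and replacing the last symbol by its complement. For $s=s_1s_2\dots\in\{0,1\}^{\mathbb N}$ let $\tau(s)=\sum_{k\ge1}t_k2^{-k}$ with $t_k=\sum_{i=1}^k s_i\pmod 2$, and put $\tau_j=\tau(K_j)$. Then for every $j\ge1$, $$\tau_{j+1}-\tau_j=\frac{2}{2^{2^j}+1}\,(1-\tau_j).$$ *)

(* Defs.v *)
From Stdlib Require Import Reals List Arith.
From Coquelicot Require Import Coquelicot.
Import ListNotations.
Open Scope R_scope.

Fixpoint blk (n : nat) : list bool :=
  match n with
  | O => [true]
  | S n' => let bb := blk n' ++ blk n' in
            removelast bb ++ [negb (last bb true)]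
  end.

Definition Kblock (j : nat) : list bool := blk (j - 1).

(* The periodic 0/1 sequence K_j, 0-indexed: K j i = s_{i+1}. *)
Definition K (j : nat) (i : nat) : bool :=
  nth (i mod length (Kblock j)) (Kblock j) false.

(* tpar s k = t_{k+1} = s_1 + ... + s_{k+1} mod 2 (s 0-indexed). *)
Fixpoint tpar (s : nat -> bool) (k : nat) : bool :=
  match k with
  | O => s O
  | S k' => xorb (tpar s k') (s k)
  end.

Definition b2R (b : bool) : R := if b then 1 else 0.

Definition tau (s : nat -> bool) : R :=
  Series (fun k => b2R (tpar s k) / 2 ^ (S k)).

(* Main.v *)
Require Import Defs.
From Stdlib Require Import Reals.
From Coquelicot Require Import Coquelicot.
From Stdlib Require Import List Arith Lia Lra.
Import ListNotations.
Open Scope R_scope.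

Lemma last_nth_ {A} (l : list A) d : last l d = nth (length l - 1) l d.
Proof.
  induction l as [|a l IH]; [reflexivity|].
  destruct l as [|b l']; [reflexivity|].
  change (last (b :: l') d = nth (length (a :: b :: l') - 1) (a :: b :: l') d).
  rewrite IH. simpl. rewrite Nat.sub_0_r. reflexivity.
Qed.

Lemma len_removelast {A} (l : list A) (d : A) : l <> [] -> length l = (length (removelast l) + 1)%nat.
Proof.
  intros H. rewrite (app_removelast_last d H) at 1. rewrite length_app. simpl. reflexivity.
Qed.

Lemma pow2_pos n : (1 <= 2 ^ n)%nat.
Proof. induction n; simpl; lia. Qed.

Lemma blk_len n : length (blk n) = (2 ^ n)%nat.
Proof.
  induction n as [|n IH]; [reflexivity|].
  simpl blk. set (bb := blk n ++ blk n).
  assert (Hne : bb <> []).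
  { intro E. assert (length bb = 0%nat) by (rewrite E; reflexivity).
    unfold bb in H. rewrite length_app, IH in H. pose proof (pow2_pos n). lia. }
  rewrite length_app. simpl. rewrite <- (len_removelast bb true Hne).
  unfold bb. rewrite length_app, IH. simpl. lia.
Qed.

Lemma Kform n i : K (S n) i = nth (i mod 2 ^ n) (blk n) false.
Proof.
  unfold K, Kblock. replace (S n - 1)%nat with n by lia. rewrite blk_len. reflexivity.
Qed.

Lemma Kper n i : K (S n) (i + 2 ^ n) = K (S n) i.
Proof.
  rewrite !Kform. f_equal. rewrite <- (Nat.mul_1_l (2 ^ n)) at 1.
  apply Nat.Div0.mod_add.
Qed.

Lemma pow2S n : (2 ^ S n = 2 ^ n + 2 ^ n)%nat.
Proof. simpl. lia. Qed.

Lemma nth_rl {A} (l : list A) x d i : l <> [] -> (i < length l - 1)%nat ->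
  nth i (removelast l ++ [x]) d = nth i l d.
Proof.
  intros H Hi. pose proof (len_removelast l d H) as HL.
  rewrite (app_removelast_last d H) at 2.
  rewrite !app_nth1 by lia. reflexivity.
Qed.

Lemma K_agree n i : (i < 2 ^ n + 2 ^ n - 1)%nat -> K (S (S n)) i = K (S n) i.
Proof.
  intros Hi. pose proof (pow2_pos n) as Hp.
  rewrite !Kform. rewrite pow2S. rewrite Nat.mod_small by lia.
  simpl blk.
  assert (Hne : blk n ++ blk n <> []).
  { intro E. assert (length (blk n ++ blk n) = 0%nat) by (rewrite E; reflexivity).
    rewrite length_app, blk_len in H. lia. }
  rewrite nth_rl; [| exact Hne | rewrite length_app, blk_len; lia].
  destruct (Nat.lt_ge_cases i (2 ^ n)) as [Hl|Hl].
  - rewrite app_nth1 by (rewrite blk_len; lia). rewrite Nat.mod_small by lia. reflexivity.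
  - rewrite app_nth2 by (rewrite blk_len; lia). rewrite blk_len. f_equal.
    replace i with ((i - 2 ^ n) + 1 * 2 ^ n)%nat at 2 by lia.
    rewrite Nat.Div0.mod_add. rewrite Nat.mod_small by lia. reflexivity.
Qed.

Lemma K_flip n : K (S (S n)) (2 ^ n + 2 ^ n - 1) = negb (K (S n) (2 ^ n + 2 ^ n - 1)).
Proof.
  pose proof (pow2_pos n) as Hp.
  rewrite !Kform. rewrite pow2S. rewrite Nat.mod_small by lia.
  simpl blk.
  assert (Hne : blk n ++ blk n <> []).
  { intro E. assert (length (blk n ++ blk n) = 0%nat) by (rewrite E; reflexivity).
    rewrite length_app, blk_len in H. lia. }
  pose proof (len_removelast _ true Hne) as HL. rewrite length_app, blk_len in HL.
  rewrite app_nth2 by lia. replace (2 ^ n + 2 ^ n - 1 - length (removelast (blk n ++ blk n)))%nat with 0%nat by lia.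
  simpl. f_equal. rewrite last_nth_. rewrite length_app, blk_len.
  rewrite app_nth2 by (rewrite blk_len; lia). rewrite blk_len.
  replace (2 ^ n + 2 ^ n - 1)%nat with ((2 ^ n - 1) + 1 * 2 ^ n)%nat by lia.
  rewrite Nat.Div0.mod_add. rewrite Nat.mod_small by lia.
  replace (2 ^ n - 1 + 1 * 2 ^ n - 2 ^ n)%nat with (2 ^ n - 1)%nat by lia.
  apply nth_indep. rewrite blk_len. lia.
Qed.

Lemma tpar_ext s s' k : (forall i, (i <= k)%nat -> s i = s' i) -> tpar s k = tpar s' k.
Proof.
  induction k as [|k IH]; intros H; simpl.
  - apply H; lia.
  - rewrite IH by (intros; apply H; lia). rewrite H by lia. reflexivity.
Qed.

Lemma tpar_period s M : (1 <= M)%nat -> (forall i, s (i + M)%nat = s i) ->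
  forall k, tpar s (k + M) = xorb (tpar s (M - 1)) (tpar s k).
Proof.
  intros HM Hs. destruct M as [|m]; [lia|].
  replace (S m - 1)%nat with m by lia.
  induction k as [|k IH].
  - simpl. f_equal. apply (Hs 0%nat).
  - change (S k + S m)%nat with (S (k + S m)). simpl tpar. rewrite IH.
    replace (S (k + S m)) with (S k + S m)%nat by lia. rewrite Hs.
    destruct (tpar s m), (tpar s k), (s (S k)); reflexivity.
Qed.

Lemma parity n : tpar (K (S n)) (2 ^ n - 1) = true.
Proof.
  induction n as [|n IH]; [reflexivity|].
  pose proof (pow2_pos n) as Hp. rewrite pow2S.
  assert (Ht : tpar (K (S n)) (2 ^ n + 2 ^ n - 1) = false).
  { replace (2 ^ n + 2 ^ n - 1)%nat with ((2 ^ n - 1) + 2 ^ n)%nat by lia.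
    rewrite tpar_period; [| lia | apply Kper]. rewrite IH. reflexivity. }
  replace (2 ^ n + 2 ^ n - 1)%nat with (S (2 ^ n + 2 ^ n - 2)) in * by lia.
  simpl tpar in *. rewrite (tpar_ext (K (S (S n))) (K (S n))).
  2:{ intros i Hi. apply K_agree. lia. }
  replace (S (2 ^ n + 2 ^ n - 2)) with (2 ^ n + 2 ^ n - 1)%nat in * by lia.
  rewrite K_flip.
  destruct (tpar (K (S n)) (2 ^ n + 2 ^ n - 2)), (K (S n) (2 ^ n + 2 ^ n - 1));
    simpl in *; congruence.
Qed.

Definition a (s : nat -> bool) (k : nat) : R := b2R (tpar s k) / 2 ^ (S k).

Lemma geom : is_series (fun k => / 2 ^ (S k)) 1.
Proof.
  assert (H := is_series_geom (/ 2)).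
  assert (H1 : Rabs (/ 2) < 1) by (rewrite Rabs_pos_eq; lra).
  specialize (H H1). apply (is_series_scal_l (/ 2)) in H.
  replace 1 with (scal (/2) (/ (1 - / 2))).
  - eapply is_series_ext; [| exact H]. intros k. simpl.
    unfold scal; simpl. unfold mult; simpl. rewrite pow_inv, Rinv_mult. reflexivity.
  - unfold scal; simpl. unfold mult; simpl. field.
Qed.

Lemma ex_a s : ex_series (a s).
Proof.
  apply (ex_series_le (a s) (fun k => / 2 ^ (S k))).
  - intros k. change (norm (a s k)) with (Rabs (a s k)). unfold a.
    assert (0 < / 2 ^ S k) by (apply Rinv_0_lt_compat, pow_lt; lra).
    destruct (tpar s k); unfold b2R, Rdiv.
    + rewrite Rmult_1_l, Rabs_pos_eq; lra.
    + rewrite Rmult_0_l, Rabs_R0; lra.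
  - eexists; apply geom.
Qed.

Lemma series_rel s M e : (1 <= M)%nat -> (forall k, tpar s (k + M) = xorb e (tpar s k)) ->
  Series (a s) = sum_f_R0 (a s) (pred M) + / 2 ^ M * (if e then 1 - Series (a s) else Series (a s)).
Proof.
  intros HM Hp.
  rewrite (Series_incr_n (a s) M) at 1 by (lia || apply ex_a).
  f_equal.
  rewrite (Series_ext _ (fun k => / 2 ^ M * (if e then / 2 ^ (S k) - a s k else a s k))).
  - rewrite Series_scal_l. f_equal. destruct e; [|reflexivity].
    rewrite Series_minus; [| eexists; apply geom | apply ex_a].
    rewrite (is_series_unique _ _ geom). reflexivity.
  - intros k. unfold a. rewrite Nat.add_comm, Hp.
    replace (S (k + M)) with (M + S k)%nat by lia. rewrite pow_add.
    assert (H1 : 2 ^ M <> 0) by (apply pow_nonzero; lra).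
    assert (H2 : 2 ^ S k <> 0) by (apply pow_nonzero; lra).
    set (P := 2 ^ M) in *. set (Q := 2 ^ S k) in *.
    destruct e, (tpar s k); simpl; field; auto.
Qed.

Theorem mainTheorem6 (j : nat) (hj : (1 <= j)%nat) :
  tau (K (S j)) - tau (K j) = 2 / (2 ^ (2 ^ j)%nat + 1) * (1 - tau (K j)).
Proof.
  destruct j as [|n]; [lia|]. clear hj.
  change (tau (K (S (S n)))) with (Series (a (K (S (S n))))).
  change (tau (K (S n))) with (Series (a (K (S n)))).
  pose proof (pow2_pos n) as Hp.
  assert (Hu1 : tpar (K (S (S n))) (2 ^ n + 2 ^ n - 1) = true)
    by (rewrite <- pow2S; apply parity).
  assert (Ht1 : tpar (K (S n)) (2 ^ n + 2 ^ n - 1) = false).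
  { replace (2 ^ n + 2 ^ n - 1)%nat with ((2 ^ n - 1) + 2 ^ n)%nat by lia.
    rewrite tpar_period; [| lia | apply Kper]. rewrite parity. reflexivity. }
  assert (PT : forall k, tpar (K (S n)) (k + (2 ^ n + 2 ^ n)) = xorb false (tpar (K (S n)) k)).
  { intros k. rewrite tpar_period; [| lia | intros i; rewrite Nat.add_assoc, !Kper; reflexivity].
    rewrite Ht1. reflexivity. }
  assert (PU : forall k, tpar (K (S (S n))) (k + (2 ^ n + 2 ^ n)) = xorb true (tpar (K (S (S n))) k)).
  { intros k. rewrite tpar_period; [| lia | intros i; rewrite <- pow2S; apply Kper].
    rewrite Hu1. reflexivity. }
  assert (hT := series_rel (K (S n)) (2 ^ n + 2 ^ n) false ltac:(lia) PT).
  assert (hU := series_rel (K (S (S n))) (2 ^ n + 2 ^ n) true ltac:(lia) PU).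
  assert (hA : sum_f_R0 (a (K (S (S n)))) (pred (2 ^ n + 2 ^ n))
             = sum_f_R0 (a (K (S n))) (pred (2 ^ n + 2 ^ n)) + / 2 ^ (2 ^ n + 2 ^ n)).
  { replace (pred (2 ^ n + 2 ^ n)) with (S (2 ^ n + 2 ^ n - 2)) by lia.
    rewrite !tech5, Rplus_assoc. f_equal.
    - apply sum_eq. intros i Hi. unfold a. f_equal. f_equal.
      apply tpar_ext. intros i' Hi'. apply K_agree. lia.
    - unfold a. replace (S (2 ^ n + 2 ^ n - 2)) with (2 ^ n + 2 ^ n - 1)%nat by lia.
      rewrite Hu1, Ht1. replace (S (2 ^ n + 2 ^ n - 1)) with (2 ^ n + 2 ^ n)%nat by lia.
      simpl b2R. field. apply pow_nonzero; lra. }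
  rewrite hA in hU. simpl in hT, hU. rewrite pow2S.
  set (P := 2 ^ (2 ^ n + 2 ^ n)) in *.
  assert (HP : 0 < P) by (apply pow_lt; lra).
  set (Q := / P) in *. assert (HPQ : P * Q = 1) by (unfold Q; field; lra).
  set (U := Series (a (K (S (S n))))) in *.
  set (T := Series (a (K (S n)))) in *.
  set (A := sum_f_R0 (a (K (S n))) (pred (2 ^ n + 2 ^ n))) in *.
  assert (E0 : U - T = Q * (2 - U - T)).
  { rewrite hU at 1. rewrite hT at 1. ring. }
  assert (E1 : (U - T) * P = 2 - U - T).
  { rewrite E0. transitivity ((P * Q) * (2 - U - T)); [ring | rewrite HPQ; ring]. }
  apply Rmult_eq_reg_r with (P + 1); [| lra].
  transitivity (2 * (1 - T)); [nra | field; lra].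
Qed.
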